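(* Let $K\subset\mathbb R^m$ be compact, let $B$ be a linear subspace of $C(K)$ such that $B=B_{\mathbb R}+iB_{\mathbb R}$ where $B_{\mathbb R}:=B\cap C_{\mathbb R}(K)$ (i.e., $B$ has a basis of real-valued functions). Let $L$ be a bounded linear operator on $B$ with $L:B\to C(K)$ and $L(B_{\mathbb R})\subseteq C_{\mathbb R}(K)$, and let $\|\cdot\|$ be a monotone norm on $B$ (i.e., $g,h\in B$ and $|g(x)|\le|h(x)|$ for all $x\in K$ imply $\|g\|\le\|h\|$). Then $$\sup_{h\in B\setminus\{0\}}\frac{\|L(h)\|_{C(K)}}{\|h\|}=\sup_{g\in B_{\mathbb R}\setminus\{0\}}\frac{\|L(g)\|_{C_{\mathbb R}(K)}}{\|g\|}.$$
   Context: $C(K)$ is the space of continuous complex-valued functions on $K$ with the maximum norm, $C_{\mathbb R}(K)$ its subspace of real-valued functions. *)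

(* Defs.v *)
From HB Require Import structures.
From mathcomp Require Import all_boot all_order all_algebra.
From mathcomp Require Import all_classical all_reals all_analysis.
From mathcomp Require Import complex.
Import Order.TTheory GRing.Theory Num.Theory.
Import numFieldNormedType.Exports.
Import ComplexField.Normc.
Local Open Scope classical_set_scope.
Local Open Scope ring_scope.

(* Continuity of a complex-valued function is expressed through its real and
   imaginary parts (the topology of C = R^2; R[i] carries no topology in the
   library).
   Elements of C(K), K a subset of R^m = 'rV[R]_m, are represented by
   functions 'rV[R]_m -> R[i] that are continuous on K (for the subspace
   topology) and vanish outside K: this is a canonical representative of
   each element of C(K), so that equality of such functions is equality
   in C(K). *)
Definition CK (R : realType) (m : nat) (K : set 'rV[R]_m) :
  set ('rV[R]_m -> R[i]) :=
  [set f : 'rV[R]_m -> R[i] | {within K, continuous (fun x => complex.Re (f x))} /\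
           {within K, continuous (fun x => complex.Im (f x))} /\
           (forall x, ~ K x -> f x = 0 :> R[i])].

Definition realvalued (R : realType) (m : nat) (f : 'rV[R]_m -> R[i]) : Prop :=
  forall x, complex.Im (f x) = 0.

Definition supnorm (R : realType) (m : nat) (K : set 'rV[R]_m)
  (f : 'rV[R]_m -> R[i]) : R :=
  sup [set normc (f x) | x in K].

Arguments CK {R m}.
Arguments realvalued {R m}.
Arguments supnorm {R m}.

(* Main.v *)
Require Import Defs.
From HB Require Import structures.
From mathcomp Require Import all_boot all_order all_algebra.
From mathcomp Require Import all_classical all_reals all_analysis.
From mathcomp Require Import complex.
From mathcomp Require Import lra ring.
Import Order.TTheory GRing.Theory Num.Theory.
Import numFieldNormedType.Exports.
Import ComplexField.Normc.
Local Open Scope classical_set_scope.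
Local Open Scope ring_scope.

Section Aux.
Variable R : realType.
Lemma realC (z : R[i]) : complex.Im z = 0 -> z = ((complex.Re z)%:C)%C.
Proof. by case: z => a b /= ->. Qed.
Lemma normc_ge0 (z : R[i]) : 0 <= normc z.
Proof. by case: z => a b; rewrite /normc sqrtr_ge0. Qed.
Lemma normcR (a : R) : 0 <= a -> normc ((a%:C)%C) = a.
Proof. by move=> a0; rewrite /normc /= expr0n /= addr0 sqrtr_sqr ger0_norm. Qed.
Lemma cs (p q a b : R) : normc ((p%:C * a%:C + q%:C * b%:C)%C : R[i]) <=
   normc ((Num.sqrt (p^+2+q^+2))%:C * (a +i* b))%C.
Proof.
rewrite /normc /=.
set s := Num.sqrt (p^+2+q^+2).
have s2 : s ^+ 2 = p^+2 + q^+2.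
  by rewrite sqr_sqrtr // addr_ge0 // sqr_ge0.
apply: ler_wsqrtr.
rewrite !mulr0 !mul0r !subr0 !addr0 !expr0n /= addr0.
rewrite !exprMn s2.
have := sqr_ge0 (p * b - q * a).
move=> H; nra.
Qed.

Lemma sup_ge0' (E : set R) : (forall e, E e -> 0 <= e) -> 0 <= sup E.
Proof.
move=> H; case: (pselect (has_sup E)) => [[[e Ee] ub]|nh].
  exact: le_trans (H e Ee) (ub_le_sup ub Ee).
by rewrite sup_out.
Qed.
Lemma sup_le' (E : set R) s : 0 <= s -> (forall e, E e -> e <= s) -> sup E <= s.
Proof.
move=> s0 H; case: (pselect (E !=set0)) => [ne|ne]; first exact: ge_sup.
have -> : E = set0 by apply/seteqP; split => // x Ex; apply: ne; exists x.
by rewrite sup0.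
Qed.
End Aux.
Arguments realC {R}. Arguments normc_ge0 {R}. Arguments normcR {R}. Arguments cs {R}. Arguments sup_ge0' {R}. Arguments sup_le' {R}.

Theorem lemmaL2 (R : realType) (m : nat) (K : set 'rV[R]_m)
  (B : set ('rV[R]_m -> R[i]))
  (L : ('rV[R]_m -> R[i]) -> ('rV[R]_m -> R[i]))
  (N : ('rV[R]_m -> R[i]) -> R) :
  compact K ->
  (* B is a linear subspace of C(K) *)
  B `<=` CK K ->
  B (fun _ => 0) ->
  (forall g h, B g -> B h -> B (fun x => g x + h x)) ->
  (forall (a : R[i]) h, B h -> B (fun x => a * h x)) ->
  (* B = B_R + i B_R, with B_R = B ∩ C_R(K) *)
  (forall h, B h -> exists g1 g2, [/\ B g1, realvalued g1, B g2, realvalued g2 &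
        h = (fun x => g1 x + 'i%C * g2 x)]) ->
  (* ||.|| is a norm on B *)
  (forall h, B h -> 0 <= N h) ->
  (forall h, B h -> N h = 0 -> h = (fun _ => 0)) ->
  (forall (a : R[i]) h, B h -> N (fun x => a * h x) = normc a * N h) ->
  (forall g h, B g -> B h -> N (fun x => g x + h x) <= N g + N h) ->
  (* ||.|| is monotone *)
  (forall g h, B g -> B h -> (forall x, K x -> normc (g x) <= normc (h x)) ->
        N g <= N h) ->
  (* L : B -> C(K) is linear, bounded, and maps B_R into C_R(K) *)
  (forall h, B h -> CK K (L h)) ->
  (forall g h, B g -> B h -> L (fun x => g x + h x) = (fun x => L g x + L h x)) ->
  (forall (a : R[i]) h, B h -> L (fun x => a * h x) = (fun x => a * L h x)) ->
  (exists C : R, forall h, B h -> supnorm K (L h) <= C * N h) ->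
  (forall g, B g -> realvalued g -> realvalued (L g)) ->
  sup [set supnorm K (L h) / N h | h in [set h | B h /\ h <> (fun _ => 0)]] =
  sup [set supnorm K (L g) / N g |
         g in [set g | B g /\ realvalued g /\ g <> (fun _ => 0)]].
Proof.
move=> cK BC B0 Badd Bscal Bdec N0 Ndef Nscal Ntri Nmono LC Ladd Lscal [C HC] Lreal.
set SC := [set _ | _ in _]; set SR := [set _ | _ in _].
have Npos : forall h, B h -> h <> (fun _ => 0) -> 0 < N h.
  move=> h Bh hn; rewrite lt0r N0 // andbT; apply/eqP => /(Ndef _ Bh); exact: hn.
have snge0 : forall f, 0 <= supnorm K f.
  move=> f; apply: sup_ge0' => _ [x _ <-]; exact: normc_ge0.
have ubC : forall h, B h -> h <> (fun _ => 0) -> supnorm K (L h) / N h <= C.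
  by move=> h Bh hn; rewrite ler_pdivrMr ?Npos //; exact: HC.
have SRub : has_ubound SR by exists C => _ [g [Bg [_ gn]] <-]; exact: ubC.
have SCub : has_ubound SC by exists C => _ [g [Bg gn] <-]; exact: ubC.
have s0 : 0 <= sup SR.
  apply: sup_ge0' => _ [g [Bg _] <-]; exact: divr_ge0 (snge0 _) (N0 _ Bg).
have key : forall h, B h -> h <> (fun _ => 0) -> supnorm K (L h) / N h <= sup SR.
  move=> h Bh hn; have Nh := Npos h Bh hn.
  rewrite ler_pdivrMr //.
  case: (pselect (has_ubound [set normc (L h x) | x in K])) => [ubh|nub]; last first.
    rewrite /supnorm sup_out; first exact: mulr_ge0 s0 (ltW Nh).
    by case.
  apply: sup_le'; first exact: mulr_ge0 s0 (ltW Nh).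
  move=> _ [x0 Kx0 <-].
  case: (Bdec h Bh) => g1 [g2 [Bg1 r1 Bg2 r2 eh]].
  have Bi2 : B (fun x => 'i%C * g2 x) := Bscal _ _ Bg2.
  have Lr1 := Lreal g1 Bg1 r1; have Lr2 := Lreal g2 Bg2 r2.
  have eLh : L h = fun x => L g1 x + 'i%C * L g2 x.
    rewrite eh.
    have E1 : L (fun x => g1 x + 'i%C * g2 x) = fun x => L g1 x + L (fun x => 'i%C * g2 x) x
      := Ladd _ _ Bg1 Bi2.
    by rewrite E1 (Lscal _ _ Bg2).
  set p := complex.Re (L g1 x0); set q := complex.Re (L g2 x0).
  have ez : L h x0 = (p +i* q)%C.
    rewrite eLh (realC _ (Lr1 x0)) (realC _ (Lr2 x0)).
    by apply/eqP; rewrite eq_complex /=; apply/andP; split; apply/eqP; rewrite /p /q; ring.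
  set n := normc (L h x0).
  have en : n = Num.sqrt (p^+2 + q^+2) by rewrite /n ez.
  have n0 : 0 <= n := normc_ge0 _.
  have sN : 0 <= sup SR * N h := mulr_ge0 s0 (ltW Nh).
  case: (eqVneq n 0) => [->//|nn0].
  have npos : 0 < n by rewrite lt0r nn0 n0.
  have n2 : n ^+ 2 = p^+2 + q^+2 by rewrite en sqr_sqrtr // addr_ge0 // sqr_ge0.
  pose g := fun x => (p%:C)%C * g1 x + (q%:C)%C * g2 x.
  have Bp1 : B (fun x => (p%:C)%C * g1 x) := Bscal _ _ Bg1.
  have Bq2 : B (fun x => (q%:C)%C * g2 x) := Bscal _ _ Bg2.
  have Bg : B g := Badd _ _ Bp1 Bq2.
  have rg : realvalued g.
    move=> x; rewrite /g (realC _ (r1 x)) (realC _ (r2 x)) /=; ring.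
  have eLg : L g = fun x => (p%:C)%C * L g1 x + (q%:C)%C * L g2 x.
    have E1 : L g = fun x => L (fun x => (p%:C)%C * g1 x) x + L (fun x => (q%:C)%C * g2 x) x
      := Ladd _ _ Bp1 Bq2.
    by rewrite E1 (Lscal _ _ Bg1) (Lscal _ _ Bg2).
  have eLgx0 : L g x0 = ((p^+2 + q^+2)%:C)%C.
    rewrite eLg /= (realC _ (Lr1 x0)) (realC _ (Lr2 x0)).
    by apply/eqP; rewrite eq_complex /=; apply/andP; split; apply/eqP; rewrite /p /q; ring.
  have L0 : L (fun _ => 0) = fun _ => 0.
    have E : L (fun x => 0 * (fun _ : 'rV[R]_m => (0 : R[i])) x) = fun x => 0 * L (fun _ => 0) x
      := Lscal 0 _ B0.
    have e0 : (fun x : 'rV[R]_m => (0 : R[i]) * (fun _ : 'rV[R]_m => (0 : R[i])) x) = fun _ => 0.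
      by apply: funext => x; rewrite mul0r.
    rewrite e0 in E; rewrite E; apply: funext => x; exact: mul0r.
  have gn0 : g <> (fun _ => 0).
    move=> g0; have := eLgx0; rewrite g0 L0 => /(congr1 (@complex.Re R)) /= H.
    by move: nn0; rewrite -sqrf_eq0 n2 -H eqxx.
  have normLg : forall x, normc (L g x) <= n * normc (L h x).
    move=> x; rewrite eLg eLh /= (realC _ (Lr1 x)) (realC _ (Lr2 x)).
    apply: le_trans (cs p q _ _) _.
    rewrite normcM normcR ?sqrtr_ge0 // -en.
    apply: ler_wpM2l => //; rewrite le_eqVlt; apply/orP; left; apply/eqP; congr (normc _).
    by apply/eqP; rewrite eq_complex /=; apply/andP; split; apply/eqP; ring.
  have ubg : has_ubound [set normc (L g x) | x in K].
    case: ubh => M ubM; exists (n * M) => _ [x Kx <-].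
    apply: le_trans (normLg x) _; apply: ler_wpM2l => //; apply: ubM; by exists x.
  have Ng : 0 < N g := Npos g Bg gn0.
  have h1 : n ^+ 2 <= supnorm K (L g).
    have m0 : [set normc (L g x) | x in K] (normc (L g x0)) by exists x0.
    have := ub_le_sup ubg m0; rewrite eLgx0 normcR ?addr_ge0 ?sqr_ge0 // -n2; exact.
  have h2 : supnorm K (L g) <= sup SR * N g.
    rewrite -ler_pdivrMr //; apply: (ub_le_sup SRub); by exists g.
  have h3 : N g <= n * N h.
    rewrite -(normcR n) // -Nscal //; apply: Nmono => // [|x _]; first exact: Bscal.
    rewrite /g eh /= (realC _ (r1 x)) (realC _ (r2 x)).
    apply: le_trans (cs p q _ _) _; rewrite -en.
    rewrite le_eqVlt; apply/orP; left; apply/eqP; congr (normc _).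
    by apply/eqP; rewrite eq_complex /=; apply/andP; split; apply/eqP; ring.
  have : n ^+ 2 <= sup SR * (n * N h).
    apply: le_trans h1 (le_trans h2 _); exact: ler_wpM2l.
  move=> H; rewrite -(ler_pM2l npos); rewrite mulrCA -expr2; apply: le_trans H _.
  by rewrite mulrCA.
apply/le_anti/andP; split.
  by apply: sup_le' => // _ [h [Bh hn] <-]; exact: key.
apply: sup_le'.
  apply: sup_ge0' => _ [g [Bg _] <-]; exact: divr_ge0 (snge0 _) (N0 _ Bg).
by move=> _ [g [Bg [_ gn]] <-]; apply: ub_le_sup SCub _ _; exists g.
Qed.
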